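(* If $q=p^n$ is odd, then $U_{(q-1)/2}(x)+U_{(q-3)/2}(x)\equiv\left(\frac2q\right)(x-1)^{(q-1)/2}\pmod p$ as polynomials.
   Context: Chebyshev polynomials of the second kind $U_k\in\mathbb Z[x]$: $U_0=1$, $U_1=2x$, $U_{k+2}=2xU_{k+1}-U_k$. $\left(\frac2q\right)$ is $1$ if $2$ is a square in ${\mathbb F}_q$ and $-1$ otherwise. *)

(* Defs.v *)
From HB Require Import structures.
From mathcomp Require Import all_boot all_order all_algebra all_field.
Set Implicit Arguments. Unset Strict Implicit. Unset Printing Implicit Defensive.
Import Order.TTheory GRing.Theory Num.Theory.
Local Open Scope ring_scope.

(* chebU_pair k = (U_k, U_{k+1}) in Z[x] *)
Fixpoint chebU_pair (k : nat) : {poly int} * {poly int} :=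
  match k with
  | 0 => (1, 'X *+ 2)
  | k'.+1 => let: (a, b) := chebU_pair k' in (b, 'X *+ 2 * b - a)
  end.

Definition chebU (k : nat) : {poly int} := (chebU_pair k).1.

(* (2/q) for the finite field F = F_q, as an element of a ring R:
   1 if 2 is a square in F, -1 otherwise *)
Definition sq2_sign (F : finFieldType) (R : nzRingType) : R :=
  if [exists x : F, x ^+ 2 == 2] then 1 else -1.

(* Main.v *)
Require Import Defs.
From HB Require Import structures.
From mathcomp Require Import all_boot all_order all_algebra all_field all_solvable.
From mathcomp Require Import ring zify.
Import GRing.Theory.
Local Open Scope ring_scope.

Lemma frob_iter (R : comNzRingType) (p : nat) (a b : R) n :
  p \in [pchar R] -> (a - b) ^+ (p ^ n) = a ^+ (p ^ n) - b ^+ (p ^ n).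
Proof.
move=> pc; elim: n => [|n IH]; first by rewrite expn0 !expr1.
rewrite expnSr !exprM IH.
have := pFrobenius_autB_comm pc (mulrC (a ^+ (p ^ n)) (b ^+ (p ^ n))).
by rewrite !pFrobenius_autE.
Qed.

Lemma core (R : comNzRingType) (p : nat) (s si X : R) (G : nat -> R) :
  p \in [pchar R] -> s * si = 1 -> s ^+ 2 + si ^+ 2 = X *+ 2 ->
  G 0%N = 1 -> G 1%N = X *+ 2 -> (forall k, G k.+2 = X *+ 2 * G k.+1 - G k) ->
  forall n m, (p ^ n)%N = (m.*2 + 3)%N ->
  (s ^+ 2 - si ^+ 2) * (G m.+1 + G m) = (s ^+ 2 - si ^+ 2) * (X *+ 2 - 2) ^+ m.+1.
Proof.
move=> pc ssi sq G0 G1 GS n m qE.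
set t := s ^+ 2; set ti := si ^+ 2.
have tti : t * ti = 1 by rewrite /t /ti -exprMn ssi expr1n.
have X2 : X *+ 2 = t + ti by rewrite sq.
have A : forall k, (t - ti) * G k = t ^+ k.+1 - ti ^+ k.+1 /\
                   (t - ti) * G k.+1 = t ^+ k.+2 - ti ^+ k.+2.
  elim=> [|k [IH1 IH2]].
    by rewrite G0 G1 X2; split; ring.
  split=> //; rewrite GS X2.
  have -> : (t - ti) * ((t + ti) * G k.+1 - G k) =
     (t + ti) * ((t - ti) * G k.+1) - (t - ti) * G k by ring.
  rewrite IH1 IH2 !exprS.
  set a := t ^+ k; set b := ti ^+ k.
  have -> : (t + ti) * (t * (t * a) - ti * (ti * b)) - (t * a - ti * b) =
    t * (t * (t * a)) - ti * (ti * (ti * b)) + (t * ti - 1) * (t * a - ti * b) by ring.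
  by rewrite tti subrr mul0r addr0.
have [B1 _] := A m.+1; have [B2 _] := A m.
rewrite mulrDr B1 B2.
have F := @frob_iter R p s si n pc; rewrite qE in F.
have ssq : (s - si) ^+ 2 = X *+ 2 - 2.
  have -> : (s - si) ^+ 2 = s ^+ 2 + si ^+ 2 - (s * si) *+ 2 by ring.
  by rewrite sq ssi.
rewrite -ssq -exprM.
have -> : (t - ti) * (s - si) ^+ (2 * m.+1) = (s + si) * (s - si) ^+ (m.*2 + 3).
  rewrite /t /ti -addnn.
  have -> : (m + m + 3 = (2 * m.+1).+1)%N by rewrite mulnS mul2n -addnn; lia.
  rewrite [in RHS]exprS; set e := (s - si) ^+ _; ring.
rewrite F.
have Es : forall z : R, z ^+ (m.*2 + 3) = z * (z ^+ 2) ^+ m.+1.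
  move=> z; rewrite -exprM -exprS; congr (_ ^+ _); rewrite mul2n; lia.
rewrite !Es (exprS t m.+1) (exprS ti m.+1) -/t -/ti.
set a := t ^+ m.+1; set b := ti ^+ m.+1.
have -> : (s + si) * (s * a - si * b) = t * a - ti * b + (s * si) * (a - b)
  by rewrite /t /ti; ring.
by rewrite ssi mul1r.
Qed.

Lemma chebU_S k : chebU k.+1 = (chebU_pair k).2.
Proof. by rewrite /chebU /=; case: (chebU_pair k). Qed.

Lemma chebU_SS k : chebU k.+2 = 'X *+ 2 * chebU k.+1 - chebU k.
Proof. by rewrite !chebU_S /chebU /=; case: (chebU_pair k). Qed.

Lemma poly_main (p n m : nat) : prime p -> (p ^ n)%N = (m.*2 + 3)%N ->
  map_poly (intr : int -> 'F_p) (chebU m.+1 + chebU m) = ('X *+ 2 - 2) ^+ m.+1.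
Proof.
move=> pr qE.
pose K := 'F_p.
pose P := {poly K}.
have pcK : p \in [pchar K] by exact: pchar_Fp.
have pcP : p \in [pchar P] by exact: (rmorph_pchar (@polyC K)).
pose c : P := 'X *+ 2.
pose h : {poly P} := 'X^4 + (1 - c%:P * 'X^2).
have szr : (size ((1 - c%:P * 'X^2)%R : {poly P}) < 5)%N.
  apply: (leq_ltn_trans (size_polyD _ _)); rewrite gtn_max size_polyN size_poly1 /=.
  apply: (leq_ltn_trans (size_polyMleq _ _)); rewrite size_polyXn.
  by move: (size_polyC_leq1 c); case: (size c%:P) => [|[]].
have szh : size h = 5%N by rewrite size_polyDl size_polyXn.
have mh : h \is monic by rewrite monicE lead_coefDl ?size_polyXn // lead_coefXn.
have mkh : mk_monic h = h by rewrite /mk_monic szh mh.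
pose Q := {poly %/ h}.
pose iota (a : P) : Q := in_qpoly h a%:P.
have iotaD a b : iota (a + b) = iota a + iota b by rewrite /iota polyCD rmorphD.
have iotaB a b : iota (a - b) = iota a - iota b by rewrite /iota polyCB rmorphB.
have iotaM a b : iota (a * b) = iota a * iota b by rewrite /iota polyCM rmorphM.
have iotaMn a k : iota (a *+ k) = iota a *+ k by rewrite /iota polyCMn rmorphMn.
have iota1 : iota 1 = 1 by rewrite /iota polyC1 rmorph1.
have iotaX a k : iota (a ^+ k) = iota a ^+ k by rewrite /iota polyC_exp rmorphXn.
have iota_inj a : iota a = 0 -> a = 0.
  move=> /(congr1 (fun z : Q => z : {poly P})); rewrite /iota in_qpoly_small /=.
    by move/eqP; rewrite polyC_eq0 => /eqP.
  by apply: (leq_ltn_trans (size_polyC_leq1 a)); apply: size_mk_monic_gt1.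
have pcQ : p \in [pchar Q] by rewrite pchar_qpoly.
pose s : Q := in_qpoly h 'X.
pose X : Q := iota 'X.
have rel : s ^+ 4 + (1 - X *+ 2 * s ^+ 2) = 0.
  have : in_qpoly h ('X^4 + (1 - c%:P * 'X^2)) = 0.
    by apply: val_inj; rewrite /= mkh (Pdiv.RingMonic.rmodpp mh).
  rewrite rmorphD rmorphB rmorph1 (rmorphXn _ 4) (rmorphM _ c%:P) (rmorphXn _ 2).
  have E : X *+ 2 = iota c by rewrite /c iotaMn.
  by move=> H; rewrite E; exact: H.
pose si : Q := X *+ 2 * s - s ^+ 3.
have ssi : s * si = 1.
  have -> : s * si = 1 - (s ^+ 4 + (1 - X *+ 2 * s ^+ 2)) by rewrite /si; ring.
  by rewrite rel subr0.
have sq : s ^+ 2 + si ^+ 2 = X *+ 2.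
  have -> : s ^+ 2 + si ^+ 2 = X *+ 2 + (s ^+ 2 - X *+ 2) * (s ^+ 4 + (1 - X *+ 2 * s ^+ 2))
    by rewrite /si; ring.
  by rewrite rel mulr0 addr0.
pose f k : P := map_poly (intr : int -> K) (chebU k).
pose G k := iota (f k).
have G0 : G 0%N = 1 by rewrite /G /f /chebU /= rmorph1 iota1.
have G1 : G 1%N = X *+ 2.
  by rewrite /G /f chebU_S /= rmorphMn /= map_polyX iotaMn.
have GS k : G k.+2 = X *+ 2 * G k.+1 - G k.
  by rewrite /G /f chebU_SS rmorphB rmorphM rmorphMn /= map_polyX iotaB iotaM iotaMn.
have C := @core _ _ _ _ _ _ pcQ ssi sq G0 G1 GS _ _ qE.
pose D : P := f m.+1 + f m - ('X *+ 2 - 2) ^+ m.+1.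
have iD : iota D = G m.+1 + G m - (X *+ 2 - 2) ^+ m.+1.
  by rewrite /D iotaB iotaD iotaX iotaB iotaMn iotaMn iota1.
have Z : (s ^+ 2 - si ^+ 2) * iota D = 0 by rewrite iD mulrBr C subrr.
have sq2 : (s ^+ 2 - si ^+ 2) ^+ 2 = iota (c ^+ 2 - 4).
  have -> : (s ^+ 2 - si ^+ 2) ^+ 2 = (s ^+ 2 + si ^+ 2) ^+ 2 - (s * si) ^+ 2 *+ 4 by ring.
  by rewrite sq ssi expr1n iotaB iotaX /c iotaMn iotaMn iota1.
have E0 : iota ((c ^+ 2 - 4) * D) = 0.
  by rewrite iotaM -sq2 expr2 -mulrA Z mulr0.
have po : odd p.
  have : odd (p ^ n) by rewrite qE oddD odd_double.
  rewrite oddX => /orP [/eqP n0|//]; move: qE; rewrite n0 expn0 -addnn; lia.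
have cne : c ^+ 2 - 4 != 0.
  apply/negP => /eqP /(congr1 (fun z : P => z.[0])).
  rewrite /c -polyC_natr hornerD hornerN hornerC horner_exp hornerMn hornerX.
  rewrite mul0rn expr2 mul0r sub0r horner0 => /eqP; rewrite oppr_eq0 -(dvdn_pcharf pcK).
  move=> d; have p4 := @dvdn_leq _ 4 isT d; move: d p4 pr po.
  by case: (p) => [|[|[|[|[|k]]]]].
have D0 : D = 0 by move/eqP: (iota_inj _ E0); rewrite mulf_eq0 (negbTE cne) => /eqP.
by move/eqP: D0; rewrite subr_eq0 rmorphD => /eqP.
Qed.
Lemma unit_pow (F : finFieldType) (x : F) : x != 0 -> x ^+ #|F|.-1 = 1.
Proof.
move=> x0; have cg : (0 < #|F|)%N by apply/card_gt0P; exists 0.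
apply: (mulfI x0); by rewrite mulr1 -exprS prednK // expf_card.
Qed.

Lemma euler_crit (F : finFieldType) (a : F) : odd #|F| -> a != 0 ->
  a ^+ (#|F|.-1./2) = if [exists x : F, x ^+ 2 == a] then 1 else -1.
Proof.
move=> oq a0.
set q1 := #|F|.-1.
have cg : (0 < #|F|)%N by apply/card_gt0P; exists 0.
have q1e : q1 = (q1./2).*2.
  have := odd_double_half q1.
  have -> : odd q1 = false.
    by move: oq; rewrite /q1 -{1}(prednK cg) /= => /negbTE.
  by rewrite add0n => E; rewrite E.
set m := q1./2.
case: ifP => [/existsP [y /eqP ya] | nsq].
  have y0 : y != 0 by apply: contraNneq a0 => y0; rewrite -ya y0 expr0n.
  by rewrite -ya -exprM mul2n -q1e unit_pow.
have q1gt : (0 < q1)%N.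
  have : (0 < #|predC1 (0:F)%R|)%N by apply/card_gt0P; exists 1%R; rewrite !inE oner_neq0.
  by rewrite cardC1.
have : has q1.-primitive_root (enum (predC1 (0 : F)%R)).
  apply: has_prim_root => //.
  - by apply/allP => x; rewrite mem_enum /= unity_rootE => x0; rewrite unit_pow.
  - exact: enum_uniq.
  - by rewrite -cardE cardC1.
case/hasP => g _ gp.
have [i ai] := prim_rootP gp (@unit_pow _ a a0).
have oi : odd i.
  apply/negPn/negP => ei; move/negbT: nsq; rewrite negb_exists => /forallP /(_ (g ^+ i./2)).
  have ie : (i./2).*2 = i by rewrite -{2}(odd_double_half i) (negbTE ei).
  by rewrite -exprM muln2 ie -ai eqxx.
have gm : g ^+ m = -1.
  have : (g ^+ m) ^+ 2 == 1 by rewrite -exprM muln2 -q1e (prim_expr_order gp).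
  rewrite sqrf_eq1 -(prim_order_dvd gp) => /orP [|/eqP //].
  move=> /dvdn_leq; rewrite /m; have := q1e; lia.
rewrite ai -exprM -(odd_double_half i) oi mulnDl mul1n exprD gm.
by rewrite -doubleMl doubleMr -q1e mulnC exprM (prim_expr_order gp) expr1n mulr1.
Qed.

Lemma pchar_eq1 (R : nzRingType) p N : p \in [pchar R] -> (0 < N)%N ->
  (N%:R == 1 :> R) = (p %| N.-1)%N.
Proof.
move=> pc N0; rewrite (dvdn_pcharf pc) -{1}(prednK N0) mulrSr -subr_eq0 addrK //.
Qed.

Lemma pchar_eqN1 (R : nzRingType) p N : p \in [pchar R] ->
  (N%:R == -1 :> R) = (p %| N.+1)%N.
Proof. by move=> pc; rewrite (dvdn_pcharf pc) mulrSr addr_eq0. Qed.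

Theorem proposition9p4 (p n : nat) (F : finFieldType) :
  prime p -> (0 < n)%N -> odd (p ^ n) -> #|F| = (p ^ n)%N ->
  map_poly (intr : int -> 'F_p) (chebU (p ^ n).-1./2 + chebU (p ^ n - 3)./2)
  = (sq2_sign F 'F_p)%:P * ('X - 1) ^+ (p ^ n).-1./2.
Proof.
move=> pr n0 oq cF.
have pq : (p <= p ^ n)%N.
  by case: (n) n0 => // k _; rewrite expnS leq_pmulr // expn_gt0 prime_gt0.
have p1 := prime_gt1 pr.
have hq := odd_double_half (p ^ n); rewrite oq in hq.
set q := (p ^ n)%N in pq hq cF oq *.
set h := q./2 in hq.
pose m := h.-1.
have qE : q = (m.*2 + 3)%N by rewrite /m -hq; move: pq hq; rewrite -!addnn; lia.
have e1 : q.-1./2 = m.+1 by rewrite qE (_ : (m.*2 + 3).-1 = (m.+1).*2)%N ?doubleK // -!addnn; lia.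
have e2 : (q - 3)./2 = m by rewrite qE addnK doubleK.
rewrite e1 e2 (@poly_main p n m pr qE).
have E : ('X *+ 2 - 2 : {poly 'F_p}) = (2 : 'F_p)%:P * ('X - 1).
  by rewrite polyC_natr; ring.
rewrite E exprMn -polyC_exp; congr (_%:P * _).
have Fc : p \in [pchar F] by exact: card_finPcharP cF pr.
have po : odd p by move: oq; rewrite oddX => /orP [/eqP n00|//]; move: n0; rewrite n00.
have two0F : (2 : F) != 0.
  rewrite -(dvdn_pcharf Fc); apply/negP => /(@dvdn_leq _ 2 isT) p2.
  by move: p1 p2 po; case: (p) => [|[|[|k]]].
have oF : odd #|F| by rewrite cF.
have ec := @euler_crit F 2 oF two0F.
rewrite cF e1 in ec.
have pcK : p \in [pchar 'F_p] by exact: pchar_Fp.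
rewrite /sq2_sign; move: ec; case: ifP => _ ec.
  move: ec; rewrite -!natrX => /eqP; rewrite (pchar_eq1 _ _ _ Fc) ?expn_gt0 //.
  by rewrite -(pchar_eq1 _ _ _ pcK) ?expn_gt0 // => /eqP.
move: ec; rewrite -!natrX => /eqP; rewrite (pchar_eqN1 _ _ _ Fc).
by rewrite -(pchar_eqN1 _ _ _ pcK) => /eqP.
Qed.
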